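(* Let $\mathcal{S}=(\mathcal{T},\mathcal{M},\Sigma)$ be an OBDA specification, $q$ a conjunctive query, $C$ a cover of $q$, and $q_C(\vec x)\leftarrow\bigwedge_{f\in C}q^{\mathrm{ucq}}_{|f}(\vec x_f)$ a cover-based JUCQ perfect rewriting of $q$ with respect to $\mathcal{T}$ and $C$. Then the optimized unfolding $\mathrm{unf}_{\mathrm{opt}}(q_C,\mathcal{M})$ is an $\mathcal{M}$-translation of $q_C$, i.e. $\mathrm{unf}_{\mathrm{opt}}(q_C,\mathcal{M})^{\mathcal{D}}=q_C^{\mathcal{A}_{(\mathcal{M},\mathcal{D})}}$ for every database instance $\mathcal{D}$ of $\Sigma$.
   Context: An OBDA specification consists of a DL-Lite$_\mathcal{R}$ TBox $\mathcal{T}$, a relational schema $\Sigma$, and a set $\mathcal{M}$ of mappings $L(\vec t)\leftsquigarrow V(\vec x)$ ($L$ a concept/role name, $\vec t$ a tuple of terms over $\vec x$ built from function symbols or variables, $V$ a view name with extension $V^{\mathcal{D}}$ given by a query over $\Sigma$, possibly a non-recursive Datalog query with function symbols). The virtual ABox is $\mathcal{A}_{(\mathcal{M},\mathcal{D})}=\{L(\vec t[\vec x\mapsto\vec a])\mid L(\vec t)\leftsquigarrow V(\vec x)\in\mathcal{M},\ \vec a\in V^{\mathcal{D}}\}$. A query $q_t$ is an $\mathcal{M}$-translation of $q'$ if $q_t^{\mathcal{D}}=q'^{\mathcal{A}_{(\mathcal{M},\mathcal{D})}}$ for every instance $\mathcal{D}$. A perfect rewriting $q_r$ of $q'$ w.r.t.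 $\mathcal{T}$ satisfies $\mathrm{cert}(q',(\mathcal{T},\mathcal{A}))=q_r^{\mathcal{A}}$ for all ABoxes $\mathcal{A}$. Unfolding of a CQ $q(\vec x)\leftarrow L_1(\vec v_1),\dots,L_n(\vec v_n)$: the Datalog query $(q_{\mathrm{unf}}(\vec x),\Pi)$ with $\Pi$ a minimal set of rules containing, for every tuple $(m_1,\dots,m_n)$ of mappings with $m_i=L_i(\vec f_i(\vec x_i))\leftsquigarrow V_i(\vec z_i)$ and every mgu $\sigma$ of $\{(L_i(\vec v_i),L_i(\vec f_i(\vec x_i)))\}$, the rule $q_{\mathrm{unf}}(\sigma(\vec x))\leftarrow V_1(\sigma(\vec z_1)),\dots,V_n(\sigma(\vec z_n))$; UCQs are unfolded CQ-wise. Cover: a collection $C$ of nonempty subsets (fragments) of the atom set of $q$ covering it, none included in another; fragment query $q_{|f}(\vec x_f)$ has the atoms of $f$ and answer variables the answer variables of $q$ in $f$ plus existential variables shared with another fragment; $q^{\mathrm{ucq}}_{|f}$ is a UCQ perfect rewriting of it; $q_C$ is a cover-based JUCQ perfect rewriting if it is a perfect rewriting of $q$. Let $\mathrm{Aux}_f$ be fresh predicates, $U_f$ view names for $\mathrm{unf}(q^{\mathrm{ucq}}_{|f},\mathcal{M})$, $\mathcal{M}^{\mathrm{aux}}=\{\mathrm{Aux}_f(\vec x_f)\leftsquigarrow U_f(\vec x_f)\mid f\in C\}$, and $q^{\mathrm{aux}}_C(\vec x)\leftarrow\bigwedge_{f\in C}\mathrm{Aux}_f(\vec x_f)$. Split: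 if $m=L(\vec x)\leftsquigarrow U(\vec x)$ with $U$ a view for a Datalog query $(U(\vec x),\{U(\vec f_i(\vec x_i))\leftarrow B_i\mid1\le i\le n\})$, then $\mathrm{split}(m)=\{L(\vec f_i(\vec x_i))\leftsquigarrow B_i\}$; otherwise $\mathrm{split}(m)=\{m\}$; $\mathrm{split}(\mathcal{M})=\bigcup_m\mathrm{split}(m)$. Signature of $L(\vec f(\vec x))\leftsquigarrow V$ is $(L,\vec f)$. Wrap: for each signature $(L,\vec f)$ with mappings $\{L(\vec f(\vec v_i))\leftsquigarrow V_i(\vec v_i)\}_{i}$ of that signature, replace them by the single mapping $L(\vec f(\vec v))\leftsquigarrow W(\vec v)$, $W$ a fresh view for $(W(\vec v),\{W(\vec v_i)\leftarrow V_i(\vec v_i)\}_i)$; $\mathrm{wrap}(\mathcal{M})$ is the union over all signatures. Optimized unfolding: $\mathrm{unf}_{\mathrm{opt}}(q_C,\mathcal{M}):=\mathrm{unf}(q^{\mathrm{aux}}_C(\vec x),\mathrm{wrap}(\mathrm{split}(\mathcal{M}^{\mathrm{aux}})))$. *)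

(* Defs.v *)
From mathcomp Require Import all_boot.
From Stdlib Require List.
Set Implicit Arguments. Unset Strict Implicit. Unset Printing Implicit Defensive.

Inductive gterm := GC (c : nat) | GF (f : nat) (args : seq gterm).

Inductive term := TVar (x : nat) | TCst (c : nat) | TFn (f : nat) (args : seq term).

Fixpoint gsubst (s : nat -> gterm) (t : term) : gterm :=
  match t with
  | TVar x => s x
  | TCst c => GC c
  | TFn f ts => GF f (map (gsubst s) ts)
  end.

Fixpoint tsubst (s : nat -> term) (t : term) : term :=
  match t with
  | TVar x => s x
  | TCst c => TCst c
  | TFn f ts => TFn f (map (tsubst s) ts)
  end.

Fixpoint trename (r : nat -> nat) (t : term) : term :=
  match t with
  | TVar x => TVar (r x)
  | TCst c => TCst c
  | TFn f ts => TFn f (map (trename r) ts)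
  end.

Fixpoint term_vars (t : term) : seq nat :=
  match t with
  | TVar x => [:: x]
  | TCst _ => [::]
  | TFn _ ts => flatten (map term_vars ts)
  end.

Fixpoint no_cst (t : term) : bool :=
  match t with
  | TVar _ => true
  | TCst _ => false
  | TFn _ ts => all no_cst ts
  end.

Fixpoint term_eqb (s t : term) {struct s} : bool :=
  match s, t with
  | TVar x, TVar y => x == y
  | TCst c, TCst d => c == d
  | TFn f ss, TFn g ts =>
      (f == g) &&
      (fix go (ss ts : seq term) : bool :=
         match ss, ts with
         | [::], [::] => true
         | s1 :: ss1, t1 :: ts1 => term_eqb s1 t1 && go ss1 ts1
         | _, _ => false
         end) ss ts
  | _, _ => false
  end.

Fixpoint terms_eqb (ss ts : seq term) : bool :=
  match ss, ts with
  | [::], [::] => true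
  | s1 :: ss1, t1 :: ts1 => term_eqb s1 t1 && terms_eqb ss1 ts1
  | _, _ => false
  end.

Fixpoint shape (t : term) : term :=
  match t with
  | TVar _ => TVar 0
  | TCst c => TCst c
  | TFn f ts => TFn f (map shape ts)
  end.

Fixpoint relabel (t : term) (n : nat) {struct t} : term * nat :=
  match t with
  | TVar _ => (TVar n, n.+1)
  | TCst c => (TCst c, n)
  | TFn f ts =>
      let p := (fix go (ts : seq term) (n : nat) : seq term * nat :=
                  match ts with
                  | [::] => ([::], n)
                  | t1 :: ts1 =>
                      let p1 := relabel t1 n in
                      let p2 := go ts1 p1.2 in (p1.1 :: p2.1, p2.2)
                  end) ts n in
      (TFn f p.1, p.2)
  end.

Fixpoint relabel_seq (ts : seq term) (n : nat) : seq term * nat :=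
  match ts with
  | [::] => ([::], n)
  | t1 :: ts1 =>
      let p1 := relabel t1 n in
      let p2 := relabel_seq ts1 p1.2 in (p1.1 :: p2.1, p2.2)
  end.

Fixpoint vars_only (ts : seq term) : option (seq nat) :=
  match ts with
  | [::] => Some [::]
  | TVar x :: ts1 => if vars_only ts1 is Some xs then Some (x :: xs) else None
  | _ => None
  end.

(* Ontology predicates (concept names, role names, fresh Aux_f)       *)

Inductive pname := PConcept (n : nat) | PRole (n : nat) | PAux (n : nat).

Definition pname_eqb (a b : pname) : bool :=
  match a, b with
  | PConcept n, PConcept m => n == m
  | PRole n, PRole m => n == m
  | PAux n, PAux m => n == m
  | _, _ => false
  end.

Definition gatom := (pname * seq gterm)%type.
Definition catom := (pname * seq nat)%type.

Definition schema := seq (nat * nat).          (* relation name, arity *)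
Definition instance := seq (nat * seq nat).

Definition instance_of (Sigma : schema) (D : instance) : Prop :=
  forall r tup, List.In (r, tup) D -> List.In (r, size tup) Sigma.

Inductive dpred := DRel (r : nat) | DIdb (p : nat).
Record drule := DRule { dhead : nat * seq term ; dbody : seq (dpred * seq term) }.
Record dquery := DQuery { dgoal : nat ; dprog : seq drule }.

Inductive dl_holds (D : instance) (P : seq drule) : dpred -> seq gterm -> Prop :=
| dl_edb r tup : List.In (r, tup) D -> dl_holds D P (DRel r) (map GC tup)
| dl_rule rl (s : nat -> gterm) :
    List.In rl P ->
    (forall a, List.In a (dbody rl) -> dl_holds D P a.1 (map (gsubst s) a.2)) ->
    dl_holds D P (DIdb (dhead rl).1) (map (gsubst s) (dhead rl).2).

Definition dl_nonrecursive (P : seq drule) : Prop :=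
  exists rank : nat -> nat, forall rl, List.In rl P ->
    forall p ts, List.In (DIdb p, ts) (dbody rl) -> rank p < rank (dhead rl).1.

Definition dquery_over (Sigma : schema) (Q : dquery) : Prop :=
  dl_nonrecursive (dprog Q) /\
  forall rl r ts, List.In rl (dprog Q) -> List.In (DRel r, ts) (dbody rl) ->
    List.In (r, size ts) Sigma.

(* A view is either a base view name (defined by a Datalog query over
   Sigma), or a (non-recursive) Datalog query with a single IDB predicate
   whose rules have bodies over views:  V(head) <- V1(ts1), ..., Vk(tsk). *)
Inductive view :=
| VBase (v : nat)
| VDef (rules : seq (seq term * seq (view * seq term))).

Definition vatom := (view * seq term)%type.
Definition vrule := (seq term * seq vatom)%type.

Inductive vholds (vdefs : nat -> dquery) (D : instance) : view -> seq gterm -> Prop :=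
| vh_base v tup :
    dl_holds D (dprog (vdefs v)) (DIdb (dgoal (vdefs v))) tup -> vholds vdefs D (VBase v) tup
| vh_def (rules : seq vrule) (r : vrule) (s : nat -> gterm) :
    List.In r rules ->
    (forall a, List.In a r.2 -> vholds vdefs D a.1 (map (gsubst s) a.2)) ->
    vholds vdefs D (VDef rules) (map (gsubst s) r.1).

(* mapping  L(t) <~ source,  source a conjunction of view atoms *)
Record mapping := Mapping { mhead : pname * seq term ; msrc : seq vatom }.

Definition dmap : mapping := Mapping (PAux 0, [::]) [::].
Definition dcatom : catom := (PAux 0, [::]).

Definition virtual_abox (vdefs : nat -> dquery) (D : instance) (M : seq mapping)
  : gatom -> Prop :=
  fun a => exists m (s : nat -> gterm), List.In m M /\
    (forall b, List.In b (msrc m) -> vholds vdefs D b.1 (map (gsubst s) b.2)) /\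
    a = ((mhead m).1, map (gsubst s) (mhead m).2).

Inductive role := RAtom (p : nat) | RInv (p : nat).
Inductive basic := BAtom (a : nat) | BExists (r : role).
Inductive concept := CPos (b : basic) | CNeg (b : basic).
Inductive genrole := GPos (r : role) | GNeg (r : role).
Inductive tbox_axiom := CIncl (b : basic) (c : concept) | RIncl (r : role) (e : genrole).
Definition tbox := seq tbox_axiom.

Record interp := Interp {
  idom : Type ;
  iconc : nat -> idom -> Prop ;
  irole : nat -> idom -> idom -> Prop ;
  iind : gterm -> idom }.

Definition role_sem (I : interp) (r : role) (x y : idom I) : Prop :=
  match r with RAtom p => @irole I p x y | RInv p => @irole I p y x end.
Definition basic_sem (I : interp) (b : basic) (x : idom I) : Prop :=
  match b with BAtom a => @iconc I a x | BExists r => exists y, role_sem r x y end.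
Definition concept_sem (I : interp) (c : concept) (x : idom I) : Prop :=
  match c with CPos b => basic_sem b x | CNeg b => ~ basic_sem b x end.
Definition genrole_sem (I : interp) (e : genrole) (x y : idom I) : Prop :=
  match e with GPos r => role_sem r x y | GNeg r => ~ role_sem r x y end.
Definition axiom_sat (I : interp) (ax : tbox_axiom) : Prop :=
  match ax with
  | CIncl b c => forall x : idom I, basic_sem b x -> concept_sem c x
  | RIncl r e => forall x y : idom I, role_sem r x y -> genrole_sem e x y
  end.

Definition assertion_sat (I : interp) (a : gatom) : Prop :=
  match a with
  | (PConcept n, [:: t]) => @iconc I n (@iind I t)
  | (PRole n, [:: t; u]) => @irole I n (@iind I t) (@iind I u)
  | _ => False
  end.

Definition abox := seq gatom.
Definition abox_wf (A : abox) : Prop :=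
  forall a, List.In a A ->
    match a with
    | (PConcept _, [:: _]) => True
    | (PRole _, [:: _; _]) => True
    | _ => False
    end.

(* models of (T, A), under the unique name assumption *)
Definition is_model (T : tbox) (A : abox) (I : interp) : Prop :=
  injective (@iind I) /\
  (forall ax, List.In ax T -> axiom_sat I ax) /\
  (forall a, List.In a A -> assertion_sat I a).

Record cq := CQ { cq_ans : seq nat ; cq_body : seq catom }.
Definition ucq := seq cq.
(* JUCQ  q(x) <- /\_k Q_k(x_k) *)
Record jucq := JUCQ { j_ans : seq nat ; j_parts : seq (seq nat * ucq) }.

Definition cq_over_ontology (q : cq) : Prop :=
  forall a, List.In a (cq_body q) ->
    match a with
    | (PConcept _, [:: _]) => True
    | (PRole _, [:: _; _]) => True
    | _ => False
    end.

(* evaluation over a (possibly virtual) ABox *)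
Definition cq_eval (A : gatom -> Prop) (q : cq) (tup : seq gterm) : Prop :=
  exists nu : nat -> gterm, tup = map nu (cq_ans q) /\
    forall a, List.In a (cq_body q) -> A (a.1, map nu a.2).
Definition ucq_eval (A : gatom -> Prop) (Q : ucq) (tup : seq gterm) : Prop :=
  exists q, List.In q Q /\ cq_eval A q tup.
Definition jucq_eval (A : gatom -> Prop) (J : jucq) (tup : seq gterm) : Prop :=
  exists nu : nat -> gterm, tup = map nu (j_ans J) /\
    forall p, List.In p (j_parts J) -> ucq_eval A p.2 (map nu p.1).

Definition catom_sat (I : interp) (nu : nat -> idom I) (a : catom) : Prop :=
  match a with
  | (PConcept n, [:: v]) => @iconc I n (nu v)
  | (PRole n, [:: v; w]) => @irole I n (nu v) (nu w)
  | _ => False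
  end.
Definition cq_holds (I : interp) (q : cq) (tup : seq gterm) : Prop :=
  exists nu : nat -> idom I, map nu (cq_ans q) = map (@iind I) tup /\
    forall a, List.In a (cq_body q) -> catom_sat nu a.
Definition individual (A : abox) (t : gterm) : Prop :=
  exists a, List.In a A /\ List.In t a.2.
Definition cert (q : cq) (T : tbox) (A : abox) (tup : seq gterm) : Prop :=
  size tup = size (cq_ans q) /\ (forall t, List.In t tup -> individual A t) /\
  forall I, is_model T A I -> cq_holds I q tup.

Definition perfect_rewriting_ucq (T : tbox) (q : cq) (Q : ucq) : Prop :=
  forall A : abox, abox_wf A -> forall tup,
    cert q T A tup <-> ucq_eval (fun a => List.In a A) Q tup.
Definition perfect_rewriting_jucq (T : tbox) (q : cq) (J : jucq) : Prop :=
  forall A : abox, abox_wf A -> forall tup,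
    cert q T A tup <-> jucq_eval (fun a => List.In a A) J tup.

Definition occurs (v : nat) (f : seq catom) : Prop :=
  exists a, List.In a f /\ v \in a.2.

Definition is_cover (q : cq) (C : seq (seq catom)) : Prop :=
  (forall f, List.In f C -> f <> [::] /\ forall a, List.In a f -> List.In a (cq_body q)) /\
  (forall a, List.In a (cq_body q) -> exists f, List.In f C /\ List.In a f) /\
  (forall i j, i < size C -> j < size C -> i <> j ->
     ~ List.incl (nth [::] C i) (nth [::] C j)).

(* xf lists (without repetition) the answer variables of q_|f *)
Definition frag_vars (q : cq) (C : seq (seq catom)) (i : nat) (xf : seq nat) : Prop :=
  uniq xf /\ forall v, v \in xf <->
    (occurs v (nth [::] C i) /\
     (v \in cq_ans q \/
      (v \notin cq_ans q /\ exists j, j < size C /\ j <> i /\ occurs v (nth [::] C j)))).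

Definition frag_query (q : cq) (C : seq (seq catom)) (xs : seq (seq nat)) (i : nat) : cq :=
  CQ (nth [::] xs i) (nth [::] C i).

(* q_C(x) <- /\_{f in C} q^ucq_|f (x_f) *)
Definition jucq_of (q : cq) (xs : seq (seq nat)) (Qs : seq ucq) : jucq :=
  JUCQ (cq_ans q) (zip xs Qs).

Definition cover_jucq_rewriting (T : tbox) (q : cq) (C : seq (seq catom))
    (xs : seq (seq nat)) (Qs : seq ucq) : Prop :=
  is_cover q C /\ size xs = size C /\ size Qs = size C /\
  (forall i, i < size C -> frag_vars q C i (nth [::] xs i)) /\
  (forall i, i < size C -> perfect_rewriting_ucq T (frag_query q C xs i) (nth [::] Qs i)) /\
  perfect_rewriting_jucq T q (jucq_of q xs Qs).

Record obda_spec := OBDASpec {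
  sT : tbox ;
  sM : seq mapping ;
  sSigma : schema ;
  svdefs : nat -> dquery }.

Definition mapping_wf (Sigma : schema) (vdefs : nat -> dquery) (m : mapping) : Prop :=
  exists v xs,
    msrc m = [:: (VBase v, map TVar xs)] /\ dquery_over Sigma (vdefs v) /\
    ((exists n, (mhead m).1 = PConcept n /\ size (mhead m).2 = 1) \/
     (exists n, (mhead m).1 = PRole n /\ size (mhead m).2 = 2)) /\
    all no_cst (mhead m).2 /\
    all (fun x => x \in xs) (flatten (map term_vars (mhead m).2)).

Definition obda_spec_wf (S : obda_spec) : Prop :=
  forall m, List.In m (sM S) -> mapping_wf (sSigma S) (svdefs S) m.

Definition is_M_translation (Sigma : schema) (vdefs : nat -> dquery) (M : seq mapping)
    (qt : view) (J : jucq) : Prop :=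
  forall D, instance_of Sigma D -> forall tup,
    vholds vdefs D qt tup <-> jucq_eval (virtual_abox vdefs D M) J tup.

Definition mvars (m : mapping) : seq nat :=
  flatten (map term_vars (mhead m).2) ++
  flatten [seq flatten (map term_vars a.2) | a <- msrc m].

Definition rename_mapping (r : nat -> nat) (m : mapping) : mapping :=
  Mapping ((mhead m).1, map (trename r) (mhead m).2)
          [seq (a.1, map (trename r) a.2) | a <- msrc m].

Definition cq_vars (q : cq) : seq nat := cq_ans q ++ flatten (map snd (cq_body q)).

Definition unif_pairs (q : cq) (rms : seq mapping) : seq (term * term) :=
  flatten [seq zip (map TVar p.1.2) (mhead p.2).2 | p <- zip (cq_body q) rms].

Definition unifier (s : nat -> term) (ps : seq (term * term)) : Prop :=
  forall p, List.In p ps -> tsubst s p.1 = tsubst s p.2.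
Definition mgu (s : nat -> term) (ps : seq (term * term)) : Prop :=
  unifier s ps /\
  forall th, unifier th ps -> exists tau, forall x, th x = tsubst tau (s x).

(* the rules q_unf(s(x)) <- V_1(s(z_1)), ..., V_n(s(z_n)), for every tuple of
   mappings (renamed apart) whose heads match the atoms of q and every mgu s *)
Definition produced (q : cq) (M : seq mapping) (r : vrule) : Prop :=
  exists (rms : seq mapping) (s : nat -> term),
    size rms = size (cq_body q) /\
    (forall i, i < size rms -> exists m (rho : nat -> nat),
        List.In m M /\ injective rho /\ nth dmap rms i = rename_mapping rho m) /\
    (forall i j, i < size rms -> j < size rms -> i <> j ->
        forall v, v \in mvars (nth dmap rms i) -> v \notin mvars (nth dmap rms j)) /\
    (forall i v, i < size rms -> v \in mvars (nth dmap rms i) -> v \notin cq_vars q) /\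
    (forall i, i < size rms ->
        (nth dcatom (cq_body q) i).1 = (mhead (nth dmap rms i)).1 /\
        size (nth dcatom (cq_body q) i).2 = size (mhead (nth dmap rms i)).2) /\
    mgu s (unif_pairs q rms) /\
    r = (map (tsubst s) (map TVar (cq_ans q)),
         flatten [seq [seq (a.1, map (tsubst s) a.2) | a <- msrc m] | m <- rms]).

Definition rename_rule (p : nat -> nat) (r : vrule) : vrule :=
  (map (trename p) r.1, [seq (a.1, map (trename p) a.2) | a <- r.2]).

Definition variant (r r' : vrule) : Prop :=
  exists p : nat -> nat, injective p /\ r' = rename_rule p r.

(* Pi is the (minimal, up to variable renaming) set of rules of unf(q, M) *)
Definition is_unf_cq (q : cq) (M : seq mapping) (Pi : seq vrule) : Prop :=
  (forall r, List.In r Pi -> produced q M r) /\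
  (forall r, produced q M r -> exists r', List.In r' Pi /\ variant r r').

Definition is_unf_ucq (Q : ucq) (M : seq mapping) (Pi : seq vrule) : Prop :=
  (forall r, List.In r Pi -> exists q, List.In q Q /\ produced q M r) /\
  (forall q r, List.In q Q -> produced q M r -> exists r', List.In r' Pi /\ variant r r').

(* M^aux = { Aux_f(x_f) <~ U_f(x_f) },  U_f the view for unf(q^ucq_|f, M) *)
Definition aux_mappings (xs : seq (seq nat)) (PiF : seq (seq vrule)) : seq mapping :=
  [seq Mapping (PAux i, map TVar (nth [::] xs i))
               [:: (VDef (nth [::] PiF i), map TVar (nth [::] xs i))]
  | i <- iota 0 (size xs)].

(* q^aux_C(x) <- /\_f Aux_f(x_f) *)
Definition aux_query (q : cq) (xs : seq (seq nat)) : cq :=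
  CQ (cq_ans q) [seq (PAux i, nth [::] xs i) | i <- iota 0 (size xs)].

Definition split_mapping (m : mapping) : seq mapping :=
  match msrc m with
  | [:: (VDef rules, args)] =>
      match vars_only (mhead m).2, vars_only args with
      | Some xs, Some ys =>
          if (xs == ys) && uniq xs
          then [seq Mapping ((mhead m).1, r.1) r.2 | r <- rules]
          else [:: m]
      | _, _ => [:: m]
      end
  | _ => [:: m]
  end.

Definition split_all (M : seq mapping) : seq mapping := flatten (map split_mapping M).

(* same signature (L, f) *)
Definition sig_eqb (m1 m2 : mapping) : bool :=
  pname_eqb (mhead m1).1 (mhead m2).1 &&
  terms_eqb (map shape (mhead m1).2) (map shape (mhead m2).2).

Fixpoint sig_reps (seen : seq mapping) (M : seq mapping) : seq mapping :=
  match M with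
  | [::] => [::]
  | m :: M' => if has (sig_eqb m) seen then sig_reps seen M'
               else m :: sig_reps (m :: seen) M'
  end.

Definition head_leaves (m : mapping) : seq nat := flatten (map term_vars (mhead m).2).

(* L(f(v)) <~ W(v),  W(v) given by { W(v_i) <- V_i(v_i) } *)
Definition wrap_group (M : seq mapping) (m0 : mapping) : mapping :=
  let grp := filter (sig_eqb m0) M in
  let W := VDef [seq (map TVar (head_leaves m), msrc m) | m <- grp] in
  let k := size (head_leaves m0) in
  Mapping ((mhead m0).1, (relabel_seq (mhead m0).2 0).1) [:: (W, map TVar (iota 0 k))].

Definition wrap (M : seq mapping) : seq mapping := map (wrap_group M) (sig_reps [::] M).

(* Pi is (the rule set of) unf_opt(q_C, M) = unf(q^aux_C, wrap(split(M^aux))) *)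
Definition is_unf_opt (M : seq mapping) (q : cq) (xs : seq (seq nat)) (Qs : seq ucq)
    (Pi : seq vrule) : Prop :=
  exists PiF : seq (seq vrule),
    size PiF = size xs /\
    (forall i, i < size xs -> is_unf_ucq (nth [::] Qs i) M (nth [::] PiF i)) /\
    is_unf_cq (aux_query q xs) (wrap (split_all (aux_mappings xs PiF))) Pi.

(* Main.v *)
Require Import Defs.
From mathcomp Require Import all_boot.
From Stdlib Require Import ClassicalEpsilon.
From mathcomp Require Import zify.
From Stdlib Require Import Lia.
Set Implicit Arguments. Unset Strict Implicit. Unset Printing Implicit Defensive.

Fixpoint term_ind2 (P : term -> Prop) (HV : forall x, P (TVar x)) (HC : forall c, P (TCst c))
  (HF : forall f ts, (forall t, List.In t ts -> P t) -> P (TFn f ts)) (t : term) {struct t} : P t :=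
  match t with
  | TVar x => HV x
  | TCst c => HC c
  | TFn f ts => HF f ts ((fix go (l : seq term) : forall u, List.In u l -> P u :=
        match l with
        | [::] => fun u (H : List.In u [::]) => match H with end
        | a :: l' => fun u H => match H with
                      | or_introl e => eq_ind a P (term_ind2 HV HC HF a) u e
                      | or_intror H' => go l' u H' end
        end) ts)
  end.

Lemma map_extIn (A B : Type) (f g : A -> B) (l : seq A) :
  (forall x, List.In x l -> f x = g x) -> map f l = map g l.
Proof. elim: l => //= a l IH H; rewrite H ?IH //; auto. Qed.

Lemma In_map (A B : Type) (f : A -> B) (l : seq A) y :
  List.In y (map f l) <-> exists x, List.In x l /\ y = f x.
Proof.
elim: l => [|a l IH] /=; first by split=> // [[x []]].
split.
- case=> [H|H]; first by exists a; auto.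
  case: (proj1 IH H) => x [H1 H2]; by exists x; auto.
- case=> x [[H|Hx] Hy]; first by left; rewrite H Hy.
  right; apply/IH; exists x; auto.
Qed.

Lemma In_flatten (A : Type) (ss : seq (seq A)) x :
  List.In x (flatten ss) <-> exists s, List.In s ss /\ List.In x s.
Proof.
elim: ss => [|s ss IH] /=; first by split=> // [[s []]].
rewrite List.in_app_iff; split.
- case=> [H|H]; first by exists s; auto.
  case: (proj1 IH H) => s' [H1 H2]; by exists s'; auto.
- case=> s' [[H|Hs] Hx]; first by left; rewrite H.
  right; apply/IH; exists s'; auto.
Qed.

Lemma In_filter (A : Type) (p : pred A) (l : seq A) x :
  List.In x (filter p l) <-> List.In x l /\ p x.
Proof.
elim: l => [|a l IH] /=; first by split=> // [[]].
case: ifP => pa /=.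
- rewrite IH; split; [case=> [<-|[]]; auto | case=> [[<-|H] px]; auto].
- rewrite IH; split; [case; auto | case=> [[<-|H] px]; [by rewrite pa in px|auto]].
Qed.

Lemma In_nth (A : Type) (x0 : A) (l : seq A) x :
  List.In x l -> exists i, i < size l /\ x = nth x0 l i.
Proof.
elim: l => //= a l IH [<-|/IH [i [H1 H2]]]; first by exists 0.
by exists i.+1.
Qed.

Lemma nth_In (A : Type) (x0 : A) (l : seq A) i : i < size l -> List.In (nth x0 l i) l.
Proof. elim: l i => //= a l IH [|i] /= H; [by left | right; exact: IH]. Qed.

Lemma In_iota m n i : List.In i (iota m n) <-> m <= i < m + n.
Proof.
elim: n m => [|n IH] m /=; first by split=> //; lia.
rewrite IH; split; first by case=> [<-|]; lia.
move=> H; case: (eqVneq m i) => [->|h]; [by left | right; lia].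
Qed.

Lemma map_zip_eq (A B : Type) (f : A -> B) (l1 l2 : seq A) :
  size l1 = size l2 ->
  (forall p, List.In p (zip l1 l2) -> f p.1 = f p.2) <-> map f l1 = map f l2.
Proof.
elim: l1 l2 => [|a l1 IH] [|b l2] //= [e].
split.
- move=> H; rewrite (H (a, b)) /=; last by left.
  by rewrite (proj1 (IH _ e)) // => p Hp; apply: H; right.
- move=> H; case: H => e1 e2 p [<-|Hp] /=; [exact: e1 | exact: (proj2 (IH _ e) e2)].
Qed.


Fixpoint gterm_ind2 (P : gterm -> Prop) (HC : forall c, P (GC c))
  (HF : forall f ts, (forall t, List.In t ts -> P t) -> P (GF f ts)) (t : gterm) {struct t} : P t :=
  match t with
  | GC c => HC c
  | GF f ts => HF f ts ((fix go (l : seq gterm) : forall u, List.In u l -> P u :=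
        match l with
        | [::] => fun u (H : List.In u [::]) => match H with end
        | a :: l' => fun u H => match H with
                      | or_introl e => eq_ind a P (gterm_ind2 HC HF a) u e
                      | or_intror H' => go l' u H' end
        end) ts)
  end.

Lemma vars_In u ts x : List.In u ts -> x \in term_vars u -> x \in flatten (map term_vars ts).
Proof.
elim: ts => //= a ts IH [E|H] Hx; rewrite mem_cat; first by rewrite E Hx.
by rewrite (IH H Hx) orbT.
Qed.

Lemma vars_In_inv ts x : x \in flatten (map term_vars ts) -> exists u, List.In u ts /\ x \in term_vars u.
Proof.
elim: ts => //= a ts IH; rewrite mem_cat => /orP[H|/IH [u [H1 H2]]]; first by exists a; auto.
by exists u; auto.
Qed.

Lemma tsubst_ext s1 s2 t : (forall x, x \in term_vars t -> s1 x = s2 x) -> tsubst s1 t = tsubst s2 t.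
Proof.
elim/term_ind2: t => [x|c|f ts IH] /= H; first by apply: H; rewrite inE.
- done.
- congr TFn; apply: map_extIn => u Hu; apply: IH => // x Hx; apply: H.
  exact: vars_In Hu Hx.
Qed.

Lemma gsubst_ext s1 s2 t : (forall x, x \in term_vars t -> s1 x = s2 x) -> gsubst s1 t = gsubst s2 t.
Proof.
elim/term_ind2: t => [x|c|f ts IH] /= H; first by apply: H; rewrite inE.
- done.
- congr GF; apply: map_extIn => u Hu; apply: IH => // x Hx; apply: H.
  exact: vars_In Hu Hx.
Qed.

Lemma tsubst_comp a b t : tsubst a (tsubst b t) = tsubst (fun x => tsubst a (b x)) t.
Proof.
elim/term_ind2: t => [x|c|f ts IH] //=; congr TFn; rewrite -map_comp; exact: map_extIn.
Qed.

Lemma tsubst_trename s r t : tsubst s (trename r t) = tsubst (fun x => s (r x)) t.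
Proof.
elim/term_ind2: t => [x|c|f ts IH] //=; congr TFn; rewrite -map_comp; exact: map_extIn.
Qed.

Lemma gsubst_tsubst g s t : gsubst g (tsubst s t) = gsubst (fun x => gsubst g (s x)) t.
Proof.
elim/term_ind2: t => [x|c|f ts IH] //=; congr GF; rewrite -map_comp; exact: map_extIn.
Qed.

Lemma gsubst_trename g r t : gsubst g (trename r t) = gsubst (fun x => g (r x)) t.
Proof.
elim/term_ind2: t => [x|c|f ts IH] //=; congr GF; rewrite -map_comp; exact: map_extIn.
Qed.

Lemma tsubst_id t : tsubst TVar t = t.
Proof.
elim/term_ind2: t => [x|c|f ts IH] //=; congr TFn; rewrite -[RHS]map_id; exact: map_extIn.
Qed.

Lemma vars_trename r t : term_vars (trename r t) = map r (term_vars t).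
Proof.
elim/term_ind2: t => [x|c|f ts IH] //=.
rewrite map_flatten -!map_comp; congr flatten; exact: map_extIn.
Qed.

Fixpoint emb (g : gterm) : term :=
  match g with GC c => TCst c | GF f gs => TFn f (map emb gs) end.
Fixpoint unemb (t : term) : gterm :=
  match t with TVar _ => GC 0 | TCst c => GC c | TFn f ts => GF f (map unemb ts) end.

Lemma unembK g : unemb (emb g) = g.
Proof.
elim/gterm_ind2: g => [c|f gs IH] //=; congr GF; rewrite -map_comp -[RHS]map_id; exact: map_extIn.
Qed.

Lemma tsubst_emb g t : tsubst (fun x => emb (g x)) t = emb (gsubst g t).
Proof.
elim/term_ind2: t => [x|c|f ts IH] //=; congr TFn; rewrite -map_comp; exact: map_extIn.
Qed.

Lemma unemb_tsubst tau t : unemb (tsubst tau t) = gsubst (fun x => unemb (tau x)) t.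
Proof.
elim/term_ind2: t => [x|c|f ts IH] //=; congr GF; rewrite -map_comp; exact: map_extIn.
Qed.

Fixpoint tsize (t : term) : nat :=
  match t with TFn _ ts => (sumn (map tsize ts)).+1 | _ => 1 end.
Definition psize (ps : seq (term * term)) := sumn [seq tsize p.1 + tsize p.2 | p <- ps].
Definition pvars (ps : seq (term * term)) := flatten [seq term_vars p.1 ++ term_vars p.2 | p <- ps].
Definition unifiable ps := exists th, unifier th ps.

Lemma tsize_gt0 t : 0 < tsize t. Proof. by case: t. Qed.

Lemma In_sumn_le (A : Type) (f : A -> nat) u l : List.In u l -> f u <= sumn (map f l).
Proof. elim: l => //= a l IH [<-|H]; [exact: leq_addr | exact: leq_trans (IH H) (leq_addl _ _)]. Qed.

Lemma occurs_le th x t : x \in term_vars t -> tsize (th x) <= tsize (tsubst th t).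
Proof.
elim/term_ind2: t => [y|c|f ts IH] /=; first by rewrite inE => /eqP ->.
- done.
- move=> /vars_In_inv [u [Hu Hx]]; apply: leq_trans (IH _ Hu Hx) _.
  apply: leqW; rewrite -map_comp; exact: (In_sumn_le (fun u => tsize (tsubst th u))).
Qed.

Lemma occurs_lt th x f ts : x \in term_vars (TFn f ts) -> tsize (th x) < tsize (tsubst th (TFn f ts)).
Proof.
move=> /vars_In_inv [u [Hu Hx]] /=; rewrite ltnS; apply: leq_trans (occurs_le th Hx) _.
rewrite -map_comp; exact: (In_sumn_le (fun u => tsize (tsubst th u))).
Qed.

Lemma unif_cons th p ps : unifier th (p :: ps) <-> tsubst th p.1 = tsubst th p.2 /\ unifier th ps.
Proof.
split; first by move=> H; split; [apply: H; left | move=> q Hq; apply: H; right].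
by case=> H1 H2 q [<-|Hq]; [exact: H1 | exact: H2].
Qed.

Lemma mgu_equiv s ps ps' : (forall th, unifier th ps <-> unifier th ps') -> mgu s ps -> mgu s ps'.
Proof. move=> E [H1 H2]; split; [exact/E | move=> th /E; exact: H2]. Qed.

Lemma mgu_nil : mgu TVar [::].
Proof. split=> [p []|th _]; exists th => x //. Qed.

Definition sig1 x t y := if y == x then t else TVar y.

Lemma tsubst_sig1_notin x t u : x \notin term_vars u -> tsubst (sig1 x t) u = u.
Proof.
move=> H; rewrite -[RHS]tsubst_id; apply: tsubst_ext => y Hy; rewrite /sig1.
by case: eqP => // E; rewrite -E Hy in H.
Qed.

Lemma vars_tsubst s u y : y \in term_vars (tsubst s u) -> exists z, z \in term_vars u /\ y \in term_vars (s z).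
Proof.
elim/term_ind2: u => [x|c|f ts IH] //=; first by exists x; rewrite inE eqxx.
move=> /vars_In_inv [u' [/In_map [u [Hu ->]] Hy]].
case: (IH _ Hu Hy) => z [Hz1 Hz2]; exists z; split => //; exact: vars_In Hu Hz1.
Qed.

Lemma mgu_elim x t rest s' : x \notin term_vars t ->
  mgu s' [seq (tsubst (sig1 x t) p.1, tsubst (sig1 x t) p.2) | p <- rest] ->
  mgu (fun y => tsubst s' (sig1 x t y)) ((TVar x, t) :: rest).
Proof.
move=> Hx [U G]; split.
- apply/unif_cons; split.
  + by rewrite /= /sig1 eqxx -tsubst_comp tsubst_sig1_notin.
  + move=> p Hp; rewrite -!tsubst_comp.
    have := U (tsubst (sig1 x t) p.1, tsubst (sig1 x t) p.2); apply; apply/In_map; by exists p.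
- move=> th /unif_cons [/= Hth1 Hth2].
  have Eth : forall y, tsubst th (sig1 x t y) = th y.
    by move=> y; rewrite /sig1; case: eqP => [->|]. 
  case: (G th) => [q /In_map [p [Hp ->]] /=|tau Htau].
    rewrite !tsubst_comp.
    rewrite (tsubst_ext (s2 := th)) ?[in RHS](tsubst_ext (s2 := th)) //; exact: Hth2.
  exists tau => y; rewrite tsubst_comp -(tsubst_ext (s1 := th)) ?Eth // => z _; exact: Htau.
Qed.

Lemma flat_In_inv (A : Type) (f : A -> seq nat) l y :
  y \in flatten (map f l) -> exists a, List.In a l /\ y \in f a.
Proof.
elim: l => //= a l IH; rewrite mem_cat => /orP[H|/IH [u [H1 H2]]]; first by exists a; auto.
by exists u; auto.
Qed.

Lemma flat_In (A : Type) (f : A -> seq nat) l a y :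
  List.In a l -> y \in f a -> y \in flatten (map f l).
Proof.
elim: l => //= b l IH [E|H] Hy; rewrite mem_cat; first by rewrite E Hy.
by rewrite (IH H Hy) orbT.
Qed.

Lemma card_sub (l1 l2 : seq nat) : {subset l1 <= l2} -> size (undup l1) <= size (undup l2).
Proof.
move=> H; apply: uniq_leq_size; first exact: undup_uniq.
by move=> y; rewrite !mem_undup; apply: H.
Qed.

Lemma card_sub_lt x (l1 l2 : seq nat) : {subset l1 <= l2} -> x \in l2 -> x \notin l1 ->
  size (undup l1) < size (undup l2).
Proof.
move=> H Hx Hn.
have Hx' : x \in undup l2 by rewrite mem_undup.
have : size (undup l1) <= size (rem x (undup l2)).
  apply: uniq_leq_size; first exact: undup_uniq.
  move=> y Hy; rewrite (mem_rem_uniq _ (undup_uniq _)) inE /=.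
  rewrite mem_undup in Hy; rewrite mem_undup (H _ Hy) andbT.
  by apply/eqP => E; rewrite -E Hy in Hn.
rewrite size_rem //; have : 0 < size (undup l2) by case: (undup l2) Hx'.
lia.
Qed.

Lemma In_zip (A B : Type) (ss : seq A) (ts : seq B) p :
  List.In p (zip ss ts) -> List.In p.1 ss /\ List.In p.2 ts.
Proof.
elim: ss ts => [|a ss IH] [|b ts] //= [<-|H]; first by auto.
case: (IH _ H); auto.
Qed.

Lemma psize_zip ss ts : size ss = size ts ->
  psize (zip ss ts) = sumn (map tsize ss) + sumn (map tsize ts).
Proof.
elim: ss ts => [|a ss IH] [|b ts] //= [e]; rewrite /psize /= -/(psize _) IH //.
by rewrite -!addnA; congr addn; rewrite addnCA.
Qed.

Lemma psize_cat ps qs : psize (ps ++ qs) = psize ps + psize qs.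
Proof. by rewrite /psize map_cat sumn_cat. Qed.

Lemma pvars_inv ps y : y \in pvars ps -> exists p, List.In p ps /\ y \in term_vars p.1 ++ term_vars p.2.
Proof. rewrite /pvars => H; exact: flat_In_inv H. Qed.

Lemma pvars_In ps p y : List.In p ps -> y \in term_vars p.1 ++ term_vars p.2 -> y \in pvars ps.
Proof. rewrite /pvars => H1 H2; exact: flat_In H1 H2. Qed.

Lemma elim_case n (IHn : forall ps, size (undup (pvars ps)) < n -> unifiable ps -> exists s, mgu s ps)
  x t rest th : unifier th ((TVar x, t) :: rest) -> t <> TVar x ->
  size (undup (pvars ((TVar x, t) :: rest))) <= n -> exists s, mgu s ((TVar x, t) :: rest).
Proof.
move=> Hth Hne Hn; have [Hth1 Hth2] := proj1 (unif_cons _ _ _) Hth; simpl in Hth1.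
have Hx : x \notin term_vars t.
  apply/negP => Hin; move: Hin Hne Hth1; destruct t as [y|c|f ts] => /=.
  - by rewrite inE => /eqP ->.
  - done.
  - move=> Hin _ E; have H := @occurs_lt th x f ts Hin; by rewrite E /= ltnn in H.
have Eth : forall y, tsubst th (sig1 x t y) = th y.
  by move=> y; rewrite /sig1; case: eqP => [->|].
have [s' Hs'] : exists s', mgu s' [seq (tsubst (sig1 x t) p.1, tsubst (sig1 x t) p.2) | p <- rest].
  apply: IHn.
  - apply: leq_trans Hn; apply: (@card_sub_lt x).
    + move=> y /pvars_inv [p' [/In_map [p [Hp ->]]]] /=.
      rewrite mem_cat => /orP[] /vars_tsubst [z [Hz]]; rewrite /sig1; case: eqP => [_ Hy|_];
        try (rewrite inE => /eqP ->).
      * apply: (@pvars_In _ (TVar x, t)); [by left | by rewrite mem_cat Hy orbT].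
      * apply: (@pvars_In _ p); [by right | by rewrite mem_cat Hz].
      * apply: (@pvars_In _ (TVar x, t)); [by left | by rewrite mem_cat Hy orbT].
      * apply: (@pvars_In _ p); [by right | by rewrite mem_cat Hz orbT].
    + apply: (@pvars_In _ (TVar x, t)); [by left | by rewrite mem_cat inE eqxx].
    + apply/negP => /pvars_inv [p' [/In_map [p [Hp ->]]]] /=.
      rewrite mem_cat => /orP[] /vars_tsubst [z [Hz]]; rewrite /sig1; case: eqP => [_ Hy|Hzx];
        try (by rewrite Hy in Hx); rewrite inE => /eqP E; by rewrite E in Hzx.
  - exists th => q /In_map [p [Hp ->]] /=; rewrite !tsubst_comp.
    rewrite (tsubst_ext (s2 := th)) ?[in RHS](tsubst_ext (s2 := th)) //; exact: Hth2.
by exists (fun y => tsubst s' (sig1 x t y)); apply: mgu_elim.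
Qed.

Lemma mgu_drop s t rest : mgu s rest -> mgu s ((t, t) :: rest).
Proof. apply: mgu_equiv => th; rewrite unif_cons; tauto. Qed.

Lemma mgu_swap s t1 t2 rest : mgu s ((t2, t1) :: rest) -> mgu s ((t1, t2) :: rest).
Proof. apply: mgu_equiv => th; rewrite !unif_cons /=; split; case; auto. Qed.

Lemma pvars_cons a b rest : pvars ((a, b) :: rest) = (term_vars a ++ term_vars b) ++ pvars rest.
Proof. by []. Qed.

Lemma psize_cons a b rest : psize ((a, b) :: rest) = tsize a + tsize b + psize rest.
Proof. by []. Qed.

Lemma mgu_step n (IHn : forall ps, size (undup (pvars ps)) < n -> unifiable ps -> exists s, mgu s ps) m :
  forall ps, psize ps <= m -> size (undup (pvars ps)) <= n -> unifiable ps -> exists s, mgu s ps.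
Proof.
elim: m => [|m IHm] [|[t1 t2] rest] Hm Hn [th Hth]; try by exists TVar; exact: mgu_nil.
  by move: Hm; rewrite psize_cons; have := tsize_gt0 t1; lia.
have Hm' : psize rest <= m.
  by move: Hm; rewrite psize_cons; have := tsize_gt0 t1; have := tsize_gt0 t2; lia.
have Hn' : size (undup (pvars rest)) <= n.
  apply: leq_trans Hn; apply: card_sub => y; rewrite pvars_cons mem_cat => ->; by rewrite orbT.
have Hrest : unifiable rest by exists th; exact: (proj2 (proj1 (unif_cons _ _ _) Hth)).
have Hth1 := proj1 (proj1 (unif_cons _ _ _) Hth); simpl in Hth1.
have Hsw : size (undup (pvars ((t2, t1) :: rest))) <= n.
  apply: leq_trans Hn; apply: card_sub => y; rewrite !pvars_cons !mem_cat.
  by case/orP => [/orP[]|] ->; rewrite ?orbT.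
have Hthsw : unifier th ((t2, t1) :: rest).
  by apply/unif_cons; split; [rewrite Hth1 | exact: (proj2 (proj1 (unif_cons _ _ _) Hth))].
move: Hm Hth Hn Hth1 Hsw Hthsw; case: t1 => [x|c|f ss]; case: t2 => [y|d|g ts] Hm Hth Hn Hth1 Hsw Hthsw.
- case: (eqVneq x y) => [<-|ne].
    by case: (IHm _ Hm' Hn' Hrest) => s Hs; exists s; apply: mgu_drop.
  by apply: (elim_case IHn Hth) => // [[E]]; rewrite E eqxx in ne.
- exact: (elim_case IHn Hth).
- exact: (elim_case IHn Hth).
- by case: (elim_case IHn Hthsw) => // s Hs; exists s; apply: mgu_swap.
- case: Hth1 => <-.
  by case: (IHm _ Hm' Hn' Hrest) => s Hs; exists s; apply: mgu_drop.
- by [].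
- by case: (elim_case IHn Hthsw) => // s Hs; exists s; apply: mgu_swap.
- by [].
- case: Hth1 => Efg Emap.
  have Hsz : size ss = size ts by rewrite -(size_map (tsubst th) ss) Emap size_map.
  have Eq : forall th', unifier th' (zip ss ts ++ rest) <-> unifier th' ((TFn f ss, TFn g ts) :: rest).
    move=> th'; rewrite unif_cons /= Efg.
    split.
    + move=> H; split.
        congr TFn; apply/(map_zip_eq (tsubst th') Hsz) => p Hp; apply: H.
        by apply: List.in_or_app; left.
      by move=> p Hp; apply: H; apply: List.in_or_app; right.
    + case=> H1 H2 p Hp; case: H1 => H1; case: (List.in_app_or _ _ _ Hp) => {}Hp; last exact: H2.
      exact: (proj2 (map_zip_eq (tsubst th') Hsz) H1).
  case: (IHm (zip ss ts ++ rest)).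
  + move: Hm; rewrite psize_cat psize_zip // psize_cons /=; lia.
  + apply: leq_trans Hn; apply: card_sub => z /pvars_inv [p [Hp0 Hz]].
    case: (List.in_app_or _ _ _ Hp0) => Hp.
    * have [H1 H2] := In_zip Hp; apply: (@pvars_In _ (TFn f ss, TFn g ts)); first by left.
      rewrite mem_cat /=; move: Hz; rewrite mem_cat => /orP[Hz|Hz].
        by rewrite (vars_In H1 Hz).
      by rewrite (vars_In H2 Hz) orbT.
    * by apply: (@pvars_In _ p) => //; right.
  + by exists th; apply/Eq.
  + move=> s Hs; exists s; apply: mgu_equiv Hs => th'; exact: Eq.
Qed.

Lemma mgu_exists ps : unifiable ps -> exists s, mgu s ps.
Proof.
have : forall n ps, size (undup (pvars ps)) <= n -> unifiable ps -> exists s, mgu s ps.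
  elim=> [|n IHn] ps' Hn.
    by apply: (@mgu_step 0 _ (psize ps')).
  apply: (@mgu_step n.+1 _ (psize ps')) => // ps'' H; apply: IHn; by rewrite -ltnS.
by move=> H; apply: (H _ ps (leqnn _)).
Qed.

Lemma In_mem (T : eqType) (x : T) l : List.In x l -> x \in l.
Proof. elim: l => //= a l IH [->|/IH H]; rewrite inE ?eqxx ?H ?orbT //. Qed.

Definition rhoF B n i y := B + (y * n + i).

Lemma rhoF_dec B n i y : i < n -> (rhoF B n i y - B) %% n = i /\ (rhoF B n i y - B) %/ n = y.
Proof.
move=> Hi; have Hn : 0 < n by apply: leq_ltn_trans Hi.
rewrite /rhoF addKn modnMDl modn_small // divnMDl // divn_small // addn0; done.
Qed.

Lemma rhoF_inj B n i : i < n -> injective (rhoF B n i).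
Proof.
move=> Hi y1 y2 E; have := rhoF_dec B y1 Hi; have := rhoF_dec B y2 Hi.
by rewrite E => [[_ ->]] [_ ->].
Qed.

Lemma le_sumn x l : x \in l -> x <= sumn l.
Proof. elim: l => //= a l IH; rewrite inE => /orP[/eqP ->|/IH]; [exact: leq_addr | move=> h; lia]. Qed.

Lemma mvars_rename r m : mvars (rename_mapping r m) = map r (mvars m).
Proof.
rewrite /mvars /rename_mapping /= map_cat; congr cat.
- rewrite map_flatten -!map_comp; congr flatten; apply: map_extIn => t _ /=; exact: vars_trename.
- rewrite map_flatten -!map_comp; congr flatten; apply: map_extIn => a _ /=.
  rewrite map_flatten -!map_comp; congr flatten; apply: map_extIn => t _ /=; exact: vars_trename.
Qed.

Section Unfold.
Variables (vdefs : nat -> dquery) (D : instance).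

Definition rule_holds (r : vrule) (g : nat -> gterm) :=
  forall b, List.In b r.2 -> vholds vdefs D b.1 (map (gsubst g) b.2).

Lemma vholds_VDef rules tup : vholds vdefs D (VDef rules) tup <->
  exists r g, List.In r rules /\ rule_holds r g /\ tup = map (gsubst g) r.1.
Proof.
split.
- move=> H; inversion H; subst; exists r, s; auto.
- case=> r [g [Hr [Hh ->]]]; exact: vh_def.
Qed.

Lemma produced_sound q M r g : produced q M r -> rule_holds r g ->
  cq_eval (virtual_abox vdefs D M) q (map (gsubst g) r.1).
Proof.
case=> rms [s [Hsz [Hren [_ [_ [Hhd [[U _] Er]]]]]]] Hr; subst r.
exists (fun x => gsubst g (s x)); split.
  by rewrite -!map_comp; apply: map_extIn.
move=> a Ha; case: (In_nth dcatom Ha) => i [Hi Ea].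
have Hi' : i < size rms by rewrite Hsz.
case: (Hren i Hi') => m [rho [Hm [_ Erm]]].
case: (Hhd i Hi'); rewrite Erm /= => Hl Hsz2.
exists m, (fun y => gsubst g (s (rho y))); split => //; split.
- move=> b Hb.
  have Hb' : List.In (b.1, map (tsubst s) (map (trename rho) b.2))
     (flatten [seq [seq (a.1, map (tsubst s) a.2) | a <- msrc m] | m <- rms]).
    apply/In_flatten; exists [seq (a.1, map (tsubst s) a.2) | a <- msrc (nth dmap rms i)]; split.
      by apply/In_map; exists (nth dmap rms i); split => //; exact: nth_In.
    apply/In_map; exists (b.1, map (trename rho) b.2); split => //.
    rewrite Erm /=; apply/In_map; by exists b.
  have := Hr _ Hb'; rewrite /= -!map_comp.
  congr vholds; apply: map_extIn => t _ /=; by rewrite gsubst_tsubst gsubst_trename.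
- rewrite Ea; congr pair => //.
  have Hp : List.In (nth dcatom (cq_body q) i, nth dmap rms i) (zip (cq_body q) rms).
    rewrite -nth_zip //; apply: nth_In; by rewrite size_zip Hsz minnn.
  have Hz : forall p, List.In p (zip (map TVar (nth dcatom (cq_body q) i).2) (mhead (nth dmap rms i)).2) ->
      tsubst s p.1 = tsubst s p.2.
    move=> p Hp2; apply: U; apply/In_flatten; eexists; split; last exact: Hp2.
    apply/In_map; by exists (nth dcatom (cq_body q) i, nth dmap rms i).
  have := proj1 (map_zip_eq (tsubst s) _) Hz.
  rewrite Erm /= size_map => /(_ Hsz2) E.
  have := congr1 (map (gsubst g)) E; rewrite -!map_comp => E2.
  rewrite (map_extIn (g := fun x => gsubst g (tsubst s (TVar x)))) // E2.
  apply: map_extIn => t _ /=; by rewrite gsubst_tsubst gsubst_trename.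
Qed.

Lemma produced_complete q M t : cq_eval (virtual_abox vdefs D M) q t ->
  exists r g, produced q M r /\ rule_holds r g /\ t = map (gsubst g) r.1.
Proof.
case=> nu [-> Hat].
pose n := size (cq_body q).
have Hch : forall i, exists ms : mapping * (nat -> gterm), i < n ->
    List.In ms.1 M /\
    (forall b, List.In b (msrc ms.1) -> vholds vdefs D b.1 (map (gsubst ms.2) b.2)) /\
    (nth dcatom (cq_body q) i).1 = (mhead ms.1).1 /\
    map nu (nth dcatom (cq_body q) i).2 = map (gsubst ms.2) (mhead ms.1).2.
  move=> i; case: (ltnP i n) => Hi; last by exists (dmap, fun _ => GC 0).
  case: (Hat _ (nth_In dcatom Hi)) => m [s [Hm [Hsrc E]]].
  by exists (m, s) => _; case: E => E1 E2.
pose pick i := proj1_sig (constructive_indefinite_description _ (Hch i)).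
have Hpick : forall i, i < n -> _ := fun i => proj2_sig (constructive_indefinite_description _ (Hch i)).
pose B := (sumn (cq_vars q)).+1.
have HB : forall x, x \in cq_vars q -> x < B by move=> x /le_sumn.
have Hbody : forall a x, List.In a (cq_body q) -> x \in a.2 -> x < B.
  move=> a x Ha Hx; apply: HB; rewrite /cq_vars mem_cat; apply/orP; right.
  exact: (flat_In (f := snd) Ha Hx).
pose rho := rhoF B n.
pose rms := [seq rename_mapping (rho i) (pick i).1 | i <- iota 0 n].
have Hrms : forall i, i < n -> nth dmap rms i = rename_mapping (rho i) (pick i).1.
  by move=> i Hi; rewrite /rms (nth_map 0) ?size_iota // nth_iota.
have Hszr : size rms = n by rewrite size_map size_iota.
pose th0 v := if v < B then emb (nu v) else emb ((pick ((v - B) %% n)).2 ((v - B) %/ n)).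
have Hth0 : forall i y, i < n -> th0 (rho i y) = emb ((pick i).2 y).
  move=> i y Hi; rewrite /th0 /rho; case: (rhoF_dec B y Hi) => -> ->.
  by rewrite ifF // /rhoF; apply/negbTE; rewrite -leqNgt leq_addr.
have Uth0 : unifier th0 (unif_pairs q rms).
  move=> p /In_flatten [l [/In_map [pp [Hpp ->]] Hp]].
  case: (In_nth (dcatom, dmap) Hpp) => j [Hj Epp].
  have Hj' : j < n by move: Hj; rewrite size_zip Hszr /n minnn.
  rewrite nth_zip /= in Epp; last by rewrite Hszr.
  rewrite Epp /= Hrms // in Hp; rewrite /= in Hp.
  case: (Hpick j Hj') => Hm [Hsrc [Hl Hmap]].
  have Hsz2 : size (map TVar (nth dcatom (cq_body q) j).2) = size (map (trename (rho j)) (mhead (pick j).1).2).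
    by rewrite !size_map -(size_map nu) Hmap size_map.
  apply: (proj2 (map_zip_eq (tsubst th0) Hsz2)) Hp.
  rewrite -!map_comp.
  rewrite (map_extIn (g := fun x => emb (nu x))); last first.
    move=> x Hx /=; rewrite /th0 ifT //; apply: (Hbody _ _ (nth_In dcatom Hj')).
    exact: In_mem.
  rewrite (map_extIn (f := fun x => tsubst th0 (trename (rho j) x)) (g := fun x => emb (gsubst (pick j).2 x))); last first.
    by move=> x _ /=; rewrite tsubst_trename -tsubst_emb; apply: tsubst_ext => z _; rewrite Hth0.
  by rewrite (map_comp emb nu) Hmap -map_comp.
have [s [Us Gs]] := mgu_exists (ex_intro _ th0 Uth0).
case: (Gs th0 Uth0) => tau Htau.
exists (map (tsubst s) (map TVar (cq_ans q)),
        flatten [seq [seq (a.1, map (tsubst s) a.2) | a <- msrc m] | m <- rms]),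
       (fun v => unemb (tau v)).
split; [|split].
- exists rms, s; split; first exact: Hszr.
  split.
    move=> i Hi; rewrite Hszr in Hi; exists (pick i).1, (rho i).
    case: (Hpick i Hi) => Hm _; split=> //; split; [exact: rhoF_inj | exact: Hrms].
  split.
    move=> i j Hi Hj Hij v; rewrite Hszr in Hi Hj; rewrite Hrms // Hrms // !mvars_rename.
    move=> /mapP [y _ ->]; apply/negP => /mapP [y' _ E]; rewrite /rho in E.
    have := rhoF_dec B y Hi; rewrite E; case: (rhoF_dec B y' Hj) => -> _ [E' _].
    by apply: Hij.
  split.
    move=> i v Hi; rewrite Hszr in Hi; rewrite Hrms // mvars_rename => /mapP [y _ ->].
    apply/negP => /HB; by rewrite /rho /rhoF ltnNge leq_addr.
  split.
    move=> i Hi; rewrite Hszr in Hi; rewrite Hrms //=; case: (Hpick i Hi) => _ [_ [Hl Hmap]].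
    split=> //; by rewrite -(size_map nu) Hmap !size_map.
  split; first by split.
  done.
- move=> b /In_flatten [l [/In_map [m' [Hm' El]] Hb]]; subst l.
  case: (proj1 (In_map _ _ _) Hm') => i [/In_iota Hi Em']; subst m'.
  have Hi' : i < n by case/andP: Hi.
  case: (proj1 (In_map _ _ _) Hb) => a [Ha ->] /=.
  case: (proj1 (In_map _ _ _) Ha) => c [Hc ->] /=.
  case: (Hpick i Hi') => _ [Hsrc _]; have := Hsrc c Hc.
  rewrite -!map_comp; congr vholds; apply: map_extIn => u _ /=.
  rewrite -unemb_tsubst tsubst_comp tsubst_trename.
  rewrite (tsubst_ext (s2 := fun x => emb ((pick i).2 x))); first by rewrite tsubst_emb unembK.
  by move=> z _; rewrite -Htau Hth0.
- rewrite -!map_comp; apply: map_extIn => x Hx /=.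
  rewrite -unemb_tsubst -Htau /th0 ifT ?unembK //; apply: HB.
  by rewrite /cq_vars mem_cat (In_mem Hx).
Qed.

Lemma variant_holds r r' g : variant r r' -> rule_holds r g ->
  exists g', rule_holds r' g' /\ map (gsubst g') r'.1 = map (gsubst g) r.1.
Proof.
case=> p [Hp ->] Hr.
pose pinv y := epsilon (inhabits 0) (fun x => p x = y).
have Hpinv : forall x, pinv (p x) = x.
  move=> x; apply: Hp; exact: (epsilon_spec (inhabits 0) (fun z => p z = p x) (ex_intro _ x erefl)).
exists (fun y => g (pinv y)); split.
- move=> b /In_map [a [Ha ->]] /=.
  suff -> : map (gsubst (fun y => g (pinv y))) (map (trename p) a.2) = map (gsubst g) a.2 by exact: Hr.
  rewrite -map_comp; apply: map_extIn => t _ /=; rewrite gsubst_trename.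
  by apply: gsubst_ext => x _; rewrite Hpinv.
- rewrite /rename_rule /= -map_comp; apply: map_extIn => t _ /=; rewrite gsubst_trename.
  by apply: gsubst_ext => x _; rewrite Hpinv.
Qed.

Lemma unf_cq_correct q M Pi t : is_unf_cq q M Pi ->
  (vholds vdefs D (VDef Pi) t <-> cq_eval (virtual_abox vdefs D M) q t).
Proof.
case=> H1 H2; rewrite vholds_VDef; split.
- case=> r [g [Hr [Hh ->]]]; exact: produced_sound (H1 _ Hr) Hh.
- move/produced_complete => [r [g [Hp [Hh ->]]]].
  case: (H2 _ Hp) => r' [Hr' Hv]; case: (variant_holds Hv Hh) => g' [Hh' E].
  by exists r', g'; split => //; split => //; rewrite E.
Qed.

Lemma unf_ucq_correct Q M Pi t : is_unf_ucq Q M Pi ->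
  (vholds vdefs D (VDef Pi) t <-> ucq_eval (virtual_abox vdefs D M) Q t).
Proof.
case=> H1 H2; rewrite vholds_VDef; split.
- case=> r [g [Hr [Hh ->]]]; case: (H1 _ Hr) => q [Hq Hp].
  exists q; split => //; exact: produced_sound Hp Hh.
- case=> q [Hq /produced_complete [r [g [Hp [Hh ->]]]]].
  case: (H2 _ _ Hq Hp) => r' [Hr' Hv]; case: (variant_holds Hv Hh) => g' [Hh' E].
  by exists r', g'; split => //; split => //; rewrite E.
Qed.
End Unfold.

Lemma relabel_TFn f ts n : relabel (TFn f ts) n = (TFn f (relabel_seq ts n).1, (relabel_seq ts n).2).
Proof. by []. Qed.
Lemma term_eqb_TFn f g ss ts : term_eqb (TFn f ss) (TFn g ts) = (f == g) && terms_eqb ss ts.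
Proof. by []. Qed.

Lemma term_eqbP s : forall t, term_eqb s t <-> s = t.
Proof.
elim/term_ind2: s => [x|c|f ss IH] [y|d|g ts] //=; try by split => // /eqP ->.
- split; [by move/eqP => -> | by case=> ->].
- split; [by move/eqP => -> | by case=> ->].
- rewrite -/(term_eqb (TFn f ss) (TFn g ts)) term_eqb_TFn.
  have E : terms_eqb ss ts <-> ss = ts.
    elim: ss ts IH => [|s1 ss IHss] [|t1 ts] IH //=.
    split.
    + case/andP => /(IH s1 (or_introl erefl)) -> /(IHss _ (fun u Hu => IH u (or_intror Hu))) ->; done.
    + case=> <- <-; apply/andP; split; first by apply/(IH s1 (or_introl erefl)).
      by apply/(IHss _ (fun u Hu => IH u (or_intror Hu))).
  split.
  + by case/andP => /eqP -> H; rewrite (proj1 E H).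
  + by case=> -> H; rewrite eqxx /=; apply: (proj2 E).
Qed.

Lemma terms_eqbP ss ts : terms_eqb ss ts <-> ss = ts.
Proof.
elim: ss ts => [|s1 ss IH] [|t1 ts] //=; split.
- by case/andP => /term_eqbP -> /IH ->.
- by case=> <- <-; apply/andP; split; [apply/term_eqbP | apply/IH].
Qed.

Lemma pname_eqbP a b : pname_eqb a b <-> a = b.
Proof. case: a b => [n|n|n] [m|m|m] /=; split => //; by [move/eqP -> | case=> ->]. Qed.

Definition sig_rel (m1 m2 : mapping) :=
  (mhead m1).1 = (mhead m2).1 /\ map Defs.shape (mhead m1).2 = map Defs.shape (mhead m2).2.

Lemma sig_eqbP m1 m2 : sig_eqb m1 m2 <-> sig_rel m1 m2.
Proof.
rewrite /sig_eqb /sig_rel; split.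
- by case/andP => /pname_eqbP -> /terms_eqbP ->.
- by case=> -> ->; apply/andP; split; [apply/pname_eqbP | apply/terms_eqbP].
Qed.

Lemma has_In (A : Type) (p : pred A) l : has p l -> exists x, List.In x l /\ p x.
Proof. elim: l => //= a l IH /orP[H|/IH [x [H1 H2]]]; [by exists a; auto | by exists x; auto]. Qed.

Lemma sig_reps_sub seen M m0 : List.In m0 (sig_reps seen M) -> List.In m0 M.
Proof.
elim: M seen => //= m1 M IH seen; case: ifP => _ /=.
- by move/IH; right.
- by case=> [<-|/IH]; [left | right].
Qed.

Lemma sig_reps_cover seen M m : List.In m M ->
  (exists m0, List.In m0 seen /\ sig_rel m0 m) \/
  (exists m0, List.In m0 (sig_reps seen M) /\ sig_rel m0 m).
Proof.
elim: M seen => //= m1 M IH seen Hm; case: ifP => Hh.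
- case: Hm => [<-|Hm]; last exact: IH.
  left; case: (has_In Hh) => m0 [H1 /sig_eqbP H]; rewrite /sig_rel in H; case: H => H2 H3.
  exists m0; split; first exact: H1.
  by rewrite /sig_rel H2 H3.
- case: Hm => [<-|Hm].
    by right; exists m1; split; [left | rewrite /sig_rel].
  case: (IH (m1 :: seen) Hm) => [[m0 [[E|H1] H2]]|[m0 [H1 H2]]].
  + by right; exists m0; split => //; left.
  + by left; exists m0.
  + by right; exists m0; split => //; right.
Qed.

Lemma shape_vars t : size (term_vars (Defs.shape t)) = size (term_vars t).
Proof.
elim/term_ind2: t => [x|c|f ts IH] //=.
elim: ts IH => //= u ts IHts IH; rewrite !size_cat IH; last by left.
by rewrite IHts // => v Hv; apply: IH; right.
Qed.

Lemma shape_vars_eq t0 t : Defs.shape t0 = Defs.shape t -> size (term_vars t0) = size (term_vars t).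
Proof. by move=> E; rewrite -shape_vars E shape_vars. Qed.

Lemma shapes_vars_eq ts0 ts : map Defs.shape ts0 = map Defs.shape ts ->
  size (flatten (map term_vars ts0)) = size (flatten (map term_vars ts)).
Proof.
elim: ts0 ts => [|a ts0 IH] [|b ts] //= [E1 E2].
by rewrite !size_cat (shape_vars_eq E1) (IH _ E2).
Qed.

Definition RS (t : term) := forall t0 n (g' g : nat -> gterm), Defs.shape t0 = Defs.shape t ->
  (forall k, k < size (term_vars t) -> g' (n + k) = g (nth 0 (term_vars t) k)) ->
  gsubst g' (relabel t0 n).1 = gsubst g t /\ (relabel t0 n).2 = n + size (term_vars t).

Lemma relabel_seq_spec ts : (forall u, List.In u ts -> RS u) ->
  forall ts0 n (g' g : nat -> gterm), map Defs.shape ts0 = map Defs.shape ts ->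
  (forall k, k < size (flatten (map term_vars ts)) ->
     g' (n + k) = g (nth 0 (flatten (map term_vars ts)) k)) ->
  map (gsubst g') (relabel_seq ts0 n).1 = map (gsubst g) ts /\
  (relabel_seq ts0 n).2 = n + size (flatten (map term_vars ts)).
Proof.
elim: ts => [|u ts IHts] IH [|u0 ts0] n g' g //=; first by rewrite addn0.
case=> E1 E2 Hg.
have Hg1 : forall k, k < size (term_vars u) -> g' (n + k) = g (nth 0 (term_vars u) k).
  move=> k Hk; rewrite Hg; last by rewrite size_cat (leq_trans Hk) ?leq_addr.
  by rewrite nth_cat Hk.
have [H1 H2] := IH u (or_introl erefl) u0 n g' g E1 Hg1.
have Hg2 : forall k, k < size (flatten (map term_vars ts)) ->
    g' ((relabel u0 n).2 + k) = g (nth 0 (flatten (map term_vars ts)) k).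
  move=> k Hk; rewrite H2 -addnA Hg; last by rewrite size_cat ltn_add2l.
  by rewrite nth_cat ltnNge leq_addr /= addKn.
have [H3 H4] := IHts (fun v Hv => IH v (or_intror Hv)) ts0 (relabel u0 n).2 g' g E2 Hg2.
by rewrite H1 H3 H4 H2 size_cat addnA.
Qed.

Lemma relabel_spec t : RS t.
Proof.
elim/term_ind2: t => [x|c|f ts IH] [y|d|h ts0] n g' g //.
- by move=> _ H /=; split; [have := H 0 isT; rewrite addn0 | rewrite addn1].
- by case=> -> /=; rewrite addn0.
- move=> Es Hg; case: Es => -> E; rewrite relabel_TFn.
  have [H1 H2] := relabel_seq_spec IH E Hg.
  by rewrite /= H1 H2.
Qed.

Lemma map_nth_iota (l : seq nat) (f : nat -> gterm) :
  map (fun j => f (nth 0 l j)) (iota 0 (size l)) = map f l.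
Proof.
apply: (@eq_from_nth _ (GC 0)); first by rewrite !size_map size_iota.
move=> k; rewrite size_map size_iota => Hk.
by rewrite !(nth_map 0) ?size_iota // nth_iota.
Qed.

Lemma wrap_char vdefs D M a : virtual_abox vdefs D (Defs.wrap M) a <-> virtual_abox vdefs D M a.
Proof.
split.
- case=> m' [s [Hm' [Hsrc ->]]].
  case: (proj1 (In_map _ _ _) Hm') => m0 [Hm0 Em']; subst m'.
  have := Hsrc _ (or_introl erefl); rewrite /= => /vholds_VDef [r [g [Hr [Hh E]]]].
  case: (proj1 (In_map _ _ _) Hr) => m [/In_filter [Hm /sig_eqbP Hsig] Er]; subst r.
  rewrite /sig_rel in Hsig; case: Hsig => EL ES.
  exists m, g; split => //; split; first exact: Hh.
  have Hk : size (head_leaves m0) = size (head_leaves m) := shapes_vars_eq ES.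
  have Hg : forall k, k < size (head_leaves m) -> s (0 + k) = g (nth 0 (head_leaves m) k).
    move=> k Hk'; have := congr1 (fun l => nth (GC 0) l k) E.
    rewrite -!map_comp /= !(nth_map 0) ?size_iota ?Hk // nth_iota // add0n; done.
  have [H1 _] := relabel_seq_spec (fun u _ => @relabel_spec u) ES Hg.
  by rewrite /= EL H1.
- case=> m [s [Hm [Hsrc ->]]].
  case: (sig_reps_cover [::] Hm) => [[m0 [[] _]]|[m0 [Hm0 Hrel]]].
  have Hrel' := Hrel; rewrite /sig_rel in Hrel; case: Hrel => EL ES.
  have Hk : size (head_leaves m0) = size (head_leaves m) := shapes_vars_eq ES.
  exists (wrap_group M m0), (fun j => s (nth 0 (head_leaves m) j)); split.
    by apply/In_map; exists m0; split => //; exact: sig_reps_sub Hm0.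
  split.
    move=> b [<-|[]] /=; apply/vholds_VDef; exists (map TVar (head_leaves m), msrc m), s; split.
      apply/In_map; exists m; split => //; apply/In_filter; split => //.
      by apply/sig_eqbP; rewrite /sig_rel EL ES.
    split; first exact: Hsrc.
    by rewrite -!map_comp /= Hk map_nth_iota.
  have Hg : forall k, k < size (head_leaves m) ->
      (fun j => s (nth 0 (head_leaves m) j)) (0 + k) = s (nth 0 (head_leaves m) k).
    by move=> k _; rewrite add0n.
  have [H1 _] := @relabel_seq_spec _ (fun u _ => @relabel_spec u) _ 0
     (fun j => s (nth 0 (head_leaves m) j)) s ES Hg.
  by rewrite /= EL H1.
Qed.

Lemma vars_only_map xs : vars_only (map TVar xs) = Some xs.
Proof. by elim: xs => //= x xs ->. Qed.

Lemma split_aux_i xs PiF i : uniq (nth [::] xs i) ->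
  split_mapping (Mapping (PAux i, map TVar (nth [::] xs i))
                         [:: (VDef (nth [::] PiF i), map TVar (nth [::] xs i))]) =
  [seq Mapping (PAux i, r.1) r.2 | r <- nth [::] PiF i].
Proof. by move=> U; rewrite /split_mapping /= vars_only_map eqxx U. Qed.

Lemma split_char vdefs D xs PiF a : (forall i, i < size xs -> uniq (nth [::] xs i)) ->
  (virtual_abox vdefs D (split_all (aux_mappings xs PiF)) a <->
   exists i, i < size xs /\ a.1 = PAux i /\ vholds vdefs D (VDef (nth [::] PiF i)) a.2).
Proof.
move=> U; split.
- case=> m [s [Hm [Hsrc ->]]].
  case: (proj1 (In_flatten _ _) Hm) => l [Hl1 Hl].
  case: (proj1 (In_map _ _ _) Hl1) => am [Ham El]; subst l.
  case: (proj1 (In_map _ _ _) Ham) => i [/In_iota Hi Eam]; subst am.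
  have Hi' : i < size xs by move: Hi; rewrite add0n => /andP [].
  have Ui : uniq (nth [::] xs i) by apply: U.
  rewrite split_aux_i // in Hl.
  case: (proj1 (In_map _ _ _) Hl) => r [Hr Em]; subst m.
  exists i; split; first exact: Hi'.
  split => //=; apply/vholds_VDef; exists r, s; split => //.
- case=> i [Hi [Ea /vholds_VDef [r [g [Hr [Hh Et]]]]]].
  exists (Mapping (PAux i, r.1) r.2), g; split.
    apply/In_flatten; exists (split_mapping (Mapping (PAux i, map TVar (nth [::] xs i))
                         [:: (VDef (nth [::] PiF i), map TVar (nth [::] xs i))])); split.
      apply/In_map; eexists; split; last reflexivity.
      by apply/In_map; exists i; split => //; apply/In_iota; rewrite add0n leq0n Hi.
    rewrite split_aux_i ?U //; apply/In_map; by exists r.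
  split => //; case: a Ea Et => [l t] /= -> ->; done.
Qed.

Theorem theorem4 (S : obda_spec) (q : cq) (C : seq (seq catom))
    (xs : seq (seq nat)) (Qs : seq ucq) (Pi : seq vrule) :
  obda_spec_wf S ->
  cq_over_ontology q ->
  cover_jucq_rewriting (sT S) q C xs Qs ->
  is_unf_opt (sM S) q xs Qs Pi ->
  is_M_translation (sSigma S) (svdefs S) (sM S) (VDef Pi) (jucq_of q xs Qs).
Proof.
move=> _ _ [_ [HxC [HQC [Hfv _]]]] [PiF [HszF [HunfF HunfO]]] D _ tup.
have U : forall i, i < size xs -> uniq (nth [::] xs i).
  by move=> i Hi; rewrite HxC in Hi; case: (Hfv i Hi).
have HxQ : size xs = size Qs by rewrite HxC HQC.
rewrite (unf_cq_correct _ _ _ HunfO).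
split.
- case=> nu [Et Hat]; exists nu; split; first exact: Et.
  move=> p Hp; case: (In_nth ([::], [::]) Hp) => j [Hj Ep].
  rewrite size_zip -HxQ minnn in Hj.
  rewrite nth_zip // in Ep; subst p => /=.
  have Ha : List.In (PAux j, nth [::] xs j) (cq_body (aux_query q xs)).
    by apply/In_map; exists j; split => //; apply/In_iota; lia.
  have := Hat _ Ha; rewrite wrap_char (split_char _ _ _ _ U) => [[i [Hi [/= [Eij] Hv]]]].
  subst i; exact: (proj1 (unf_ucq_correct _ _ _ (HunfF j Hj)) Hv).
- case=> nu [Et Hp]; exists nu; split; first exact: Et.
  move=> a /In_map [i [/In_iota Hi ->]] /=.
  have Hi' : i < size xs by lia.
  rewrite wrap_char (split_char _ _ _ _ U); exists i; split => //; split => //=.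
  apply: (proj2 (unf_ucq_correct _ _ _ (HunfF i Hi'))).
  have := Hp (nth [::] xs i, nth [::] Qs i); apply.
  rewrite /= -nth_zip //; apply: nth_In; by rewrite size_zip -HxQ minnn.
Qed.
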